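(* Let $\mathcal{A}$ be a collection of pairwise non-parallel hyperplanes in $Q=S_1\times\cdots\times S_n$, let $0\le a\le n$, let $\mathbb{P}_a$ be a probability measure on $Q_a$, let $\delta_{a+1},\dots,\delta_n\in[0,1/2]$, and let $\mathbb{P}_k$, $\alpha_k$ be defined as in the context. Then for every $a<k\le n$ and every $t\in\mathbb{N}$, $$\mathbb{E}_{k-1}\big[\alpha_k(x)^t\big]\le\frac{1}{|S_k|^t}\sum_{F_1,\dots,F_t\in\mathcal{N}_k} c\big((F_1\cup\cdots\cup F_t)\cap[a]\big)\cdot\nu\big((F_1\cup\cdots\cup F_t)\cap[a+1,k-1]\big).$$
   Context: $S_1,\dots,S_n$ are finite sets each with at least two elements; $Q_k = S_1\times\cdots\times S_k$. A hyperplane is $A = A_1\times\cdots\times A_n\subseteq Q$ with each $A_k$ either $S_k$ or a singleton in $S_k$; $F(A)=\{k: A_k\text{ is a singleton}\}$; hyperplanes are parallel if they have the same $F$. Hyperplanes in $\mathcal{A}$ have non-empty $F(A)$; write $\mathcal{A}=\{A_F:F\in\mathcal{F}\}$. A set $X\subseteq Q_k$ is identified with $X\times S_{k+1}\times\cdots\times S_n$; a hyperplane with $F(A)\subseteq[k]$ is viewed as a subset of $Q_k$. Let $\mathcal{F}_k=\{F\in\mathcal{F}:F\subseteq[k]\}$, $\mathcal{N}_k=\mathcal{F}_k\setminus\mathcal{F}_{k-1}$, $B_k=\bigcup_{F\in\mathcal{N}_k}A_F\subseteq Q_k$. For $k>a$, given $\mathbb{P}_{k-1}$ on $Q_{k-1}$,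 let $\alpha_k(x)=|\{y\in S_k:(x,y)\in B_k\}|/|S_k|$ for $x\in Q_{k-1}$, and define $\mathbb{P}_k(x,y)=\max\{0,\frac{\alpha_k(x)-\delta_k}{\alpha_k(x)(1-\delta_k)}\}\frac{\mathbb{P}_{k-1}(x)}{|S_k|}$ if $(x,y)\in B_k$ and $\mathbb{P}_k(x,y)=\min\{\frac{1}{1-\alpha_k(x)},\frac{1}{1-\delta_k}\}\frac{\mathbb{P}_{k-1}(x)}{|S_k|}$ otherwise. $\mathbb{E}_{k-1}$ is expectation over $x\sim\mathbb{P}_{k-1}$. For $I\subseteq[a]$, $c(I)=\max\{\mathbb{P}_a(H):H\text{ a hyperplane in }Q_a\text{ with }F(H)=I\}$ (so $c(\emptyset)=1$); for $J\subseteq[a+1,n]$, $\nu(J)=\prod_{j\in J}\frac{1}{(1-\delta_j)|S_j|}$ (so $\nu(\emptyset)=1$). *)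

(* Defs.v *)
From HB Require Import structures.
From mathcomp Require Import all_boot all_order all_algebra.
Set Implicit Arguments. Unset Strict Implicit. Unset Printing Implicit Defensive.
Import Order.TTheory GRing.Theory Num.Theory.
Local Open Scope ring_scope.

(* Encoding:
   - All S_j (1 <= j <= n, paper indexing) are subsets  S j : {set T}  of a
     common finite type T.
   - Coordinates are the ordinals i : 'I_n; ordinal i is the paper's
     coordinate i+1.  So the paper's [k] = {1..k} is {i : 'I_n | i < k}.
   - A point of Q_k = S_1 x ... x S_k is encoded as x : {ffun 'I_n -> option T}
     with x i = Some y, y \in S (i+1), for i < k, and x i = None for i >= k.
   - A hyperplane with fixed-coordinate set F and fixed values g is
     { x | forall i in F, x i = Some (g i) }. *)

Definition pt (n : nat) (T : finType) := {ffun 'I_n -> option T}.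

Section Defs.
Variables (R : realFieldType) (n : nat) (T : finType) (S : nat -> {set T}).

Definition inQ (k : nat) (x : pt n T) : bool :=
  [forall i : 'I_n, if (i < k)%N then
                      (if x i is Some y then y \in S i.+1 else false)
                    else x i == None].

Definition Qset (k : nat) : {set pt n T} := [set x | inQ k x].

Definition subk (F : {set 'I_n}) (k : nat) : bool := [forall i in F, (i < k)%N].

Definition inA (g : {ffun 'I_n -> T}) (F : {set 'I_n}) (x : pt n T) : bool :=
  [forall i in F, x i == Some (g i)].

(* (x, y) : coordinate j (0-based, i.e. paper coordinate j+1) set to y *)
Definition ext (j : nat) (x : pt n T) (y : T) : pt n T :=
  [ffun i : 'I_n => if (i : nat) == j then Some y else x i].

Definition trunc (j : nat) (z : pt n T) : pt n T :=
  [ffun i : 'I_n => if (i < j)%N then z i else None].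

Variables (Fam : {set {set 'I_n}}) (h : {set 'I_n} -> {ffun 'I_n -> T}).
(* the arrangement A = { A_F : F in Fam }, A_F fixes coordinate i in F to h F i *)

Definition Nk (k : nat) : {set {set 'I_n}} :=
  [set F in Fam | subk F k && ~~ subk F k.-1].

Definition inB (k : nat) (z : pt n T) : bool :=
  [exists F in Nk k, inA (h F) F z].

Definition alpha (k : nat) (x : pt n T) : R :=
  #|[set y in S k | inB k (ext k.-1 x y)]|%:R / #|S k|%:R.

Variables (a : nat) (Pa : pt n T -> R) (delta : nat -> R).

Definition step (k : nat) (Pprev : pt n T -> R) (z : pt n T) : R :=
  let x := trunc k.-1 z in
  let al := alpha k x in
  (if inB k z then Num.max 0 ((al - delta k) / (al * (1 - delta k)))
   else Num.min (1 - al)^-1 (1 - delta k)^-1) * Pprev x / #|S k|%:R.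

(* P_k for k >= a (P_k = P_a for k <= a; only k >= a is meaningful) *)
Fixpoint Pk (k : nat) : pt n T -> R :=
  match k with
  | 0 => Pa
  | k'.+1 => if (k'.+1 <= a)%N then Pa else step k'.+1 (Pk k')
  end.

Definition Ealpha (k t : nat) : R :=
  \sum_(x in Qset k.-1) Pk k.-1 x * alpha k x ^+ t.

Definition cI (I : {set 'I_n}) : R :=
  \big[Num.max/0]_(g : {ffun 'I_n -> T} | [forall i in I, g i \in S i.+1])
     \sum_(x in Qset a | inA g I x) Pa x.

Definition nu (J : {set 'I_n}) : R :=
  \prod_(i in J) ((1 - delta i.+1) * #|S i.+1|%:R)^-1.

Definition rhs (k t : nat) : R :=
  (#|S k|%:R ^+ t)^-1 *
  \sum_(Fs : {ffun 'I_t -> {set 'I_n}} | [forall j, Fs j \in Nk k])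
     (cI [set i in \bigcup_(j < t) Fs j | (i < a)%N] *
      nu [set i in \bigcup_(j < t) Fs j | (a <= i)%N && (i.+1 < k)%N]).

End Defs.

(* Main.v *)
Require Import Defs.
From HB Require Import structures.
From mathcomp Require Import all_boot all_order all_algebra.
From mathcomp Require Import zify ring lra.
Import Order.TTheory GRing.Theory Num.Theory.
Local Open Scope ring_scope.
Set Implicit Arguments. Unset Strict Implicit. Unset Printing Implicit Defensive.


Section Basic.
Variables (n : nat) (T : finType) (S : nat -> {set T}).

Lemma inQP k (x : pt n T) :
  reflect (forall i : 'I_n, if (i < k)%N then (if x i is Some y then y \in S i.+1 else false)
                  else x i == None) (inQ S k x).
Proof. exact: forallP. Qed.

Lemma ext_trunc m (x : pt n T) y : inQ S m x -> trunc m (ext m x y) = x.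
Proof.
move/inQP=> Hx; apply/ffunP=> i; rewrite !ffunE.
have := Hx i; case: ltnP => Hi.
  by rewrite (ltn_eqF Hi).
by move/eqP.
Qed.

Lemma ext_inQ m (x : pt n T) y : inQ S m x -> y \in S m.+1 -> inQ S m.+1 (ext m x y).
Proof.
move/inQP=> Hx Hy; apply/inQP=> i; rewrite ffunE.
have := Hx i; case: (ltngtP i m) => Hi.
- by rewrite ltnS (ltnW Hi).
- by rewrite ltnS leqNgt Hi.
- by rewrite Hi ltnSn.
Qed.

Lemma ext_inj m (x x' : pt n T) y y' : (m < n)%N -> inQ S m x -> inQ S m x' ->
  ext m x y = ext m x' y' -> x = x' /\ y = y'.
Proof.
move=> Hm Hx Hx' E; split.
  by rewrite -(ext_trunc y Hx) -(ext_trunc y' Hx') E.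
have := congr1 (fun f : pt n T => f (Ordinal Hm)) E; rewrite !ffunE /= eqxx.
by case.
Qed.

Lemma sumQ (V : nmodType) m (Hm : (m < n)%N) (f : pt n T -> V) :
  \sum_(z in Qset n S m.+1) f z =
  \sum_(x in Qset n S m) \sum_(y in S m.+1) f (ext m x y).
Proof.
rewrite pair_big_dep /=.
rewrite -(big_imset (fun z => f z) (h := fun p : pt n T * T => ext m p.1 p.2)
   (A := [pred p : pt n T * T | (p.1 \in Qset n S m) && (p.2 \in S m.+1)])).
  apply: eq_bigl => z; rewrite inE; apply/idP/imsetP.
    move=> Hz; have /inQP Hq := Hz; have := Hq (Ordinal Hm); rewrite /= ltnSn.
    case Ez: (z _) => [y|] // Hy.
    exists (trunc m z, y); last first.
      apply/ffunP=> i; rewrite !ffunE /=; case: ltngtP => Hi.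
      - by [].
      - have := Hq i.
        by rewrite ltnS leqNgt Hi => /eqP.
      - by rewrite -Ez; f_equal; apply: val_inj.
    rewrite inE /= Hy andbT inE; apply/inQP => i; rewrite ffunE.
    have := Hq i.
    by case: (ltnP i m) => Hi //; rewrite ltnS (ltnW Hi).
  case=> [[x y]]; rewrite inE => /andP[/= Hx Hy] ->; rewrite inE in Hx.
  exact: ext_inQ.
move=> [x y] [x' y']; rewrite !inE => /andP[/= Hx Hy] /andP[/= Hx' Hy'] E.
by case: (ext_inj Hm Hx Hx' E) => -> ->.
Qed.
End Basic.
Section Num. Variable R : realFieldType.
Lemma fac_bounds (al d : R) : 0 <= al <= 1 -> 0 <= d <= 1/2 ->
  let A := Num.max 0 ((al - d) / (al * (1 - d))) in
  let B := Num.min (1 - al)^-1 (1 - d)^-1 in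
  [/\ 0 <= A, A <= (1 - d)^-1, 0 <= B, B <= (1 - d)^-1 & al * A + (1 - al) * B <= 1].
Proof.
move=> /andP[al0 al1] /andP[d0 d1] A B.
have d1' : 0 < 1 - d by lra.
have u0 : 0 < (1 - d)^-1 by rewrite invr_gt0.
have uE : (1 - d)^-1 * (1 - d) = 1 by rewrite mulVf // gt_eqF.
have A0 : 0 <= A by rewrite le_max lexx.
have B0 : 0 <= B by rewrite le_min invr_ge0 (ltW u0) andbT subr_ge0.
have Bu : B <= (1 - d)^-1 by rewrite ge_min lexx orbT.
have Au : A <= (1 - d)^-1.
  rewrite ge_max (ltW u0) /=.
  have [->|alp] := eqVneq al 0; first by rewrite mul0r invr0 mulr0 ltW.
  have alp' : 0 < al by rewrite lt_def alp al0.
  rewrite invfM mulrA ler_pdivrMr // ler_pdivrMr // uE mul1r.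
  lra.
split => //.
have [ald|dal] := leP al d.
  have -> : A = 0.
    apply/max_l. have [->|alp] := eqVneq al 0; first by rewrite mul0r invr0 mulr0.
    have alp' : 0 < al by rewrite lt_def alp al0.
    by apply: mulr_le0_ge0; [lra | rewrite invr_ge0 mulr_ge0 // ltW].
  have a1 : 0 < 1 - al by lra.
  have : B <= (1 - al)^-1 by rewrite ge_min lexx.
  rewrite mulr0 add0r -(ler_pM2l a1) mulfV ?gt_eqF //.
have alp' : 0 < al by lra.
have -> : A = (al - d) / (al * (1 - d)).
  by apply/max_r; rewrite divr_ge0 // ?subr_ge0 ?ltW // mulr_gt0.
have -> : al * ((al - d) / (al * (1 - d))) = (al - d) * (1 - d)^-1.
  by field; rewrite !gt_eqF.
have : (1 - al) * B <= (1 - al) * (1 - d)^-1 by rewrite ler_wpM2l // subr_ge0.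
move: uE; set u := (1 - d)^-1 => uE.
nra.
Qed.
End Num.

Section Main.
Variables (R : realFieldType) (n : nat) (T : finType) (S : nat -> {set T}).
Hypothesis hS : forall j, (1 <= j <= n)%N -> (2 <= #|S j|)%N.
Variables (Fam : {set {set 'I_n}}) (h : {set 'I_n} -> {ffun 'I_n -> T}).
Variables (a : nat) (Pa : pt n T -> R) (delta : nat -> R).
Hypothesis hPa0 : forall x, x \in Qset n S a -> 0 <= Pa x.
Hypothesis hdelta : forall j, (a < j <= n)%N -> 0 <= delta j <= 1 / 2.

Local Notation P := (Pk S Fam h a Pa delta).

Lemma Pk_a : P a = Pa.
Proof. by case: a => //= a'; rewrite leqnn. Qed.

Lemma Pk_S m : (a <= m)%N -> P m.+1 = step S Fam h delta m.+1 (P m).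
Proof. by move=> H /=; rewrite leqNgt ltnS H. Qed.

Lemma sum_card (I : finType) (A : {set I}) (b : pred I) :
  \sum_(y in A) (b y)%:R = #|[set y in A | b y]|%:R :> R.
Proof.
have -> : #|[set y in A | b y]|%:R = \sum_(y in [set y in A | b y]) (1 : R).
  by rewrite sumr_const.
rewrite [RHS]big_mkcond [LHS]big_mkcond /=; apply: eq_bigr => y _.
by rewrite inE; case: (y \in A); case: (b y).
Qed.

Lemma Sk_gt0 k : (1 <= k <= n)%N -> 0 < #|S k|%:R :> R.
Proof. by move=> /hS H; rewrite ltr0n; apply: leq_trans H. Qed.

Lemma alpha01 k x : (1 <= k <= n)%N -> 0 <= alpha R S Fam h k x <= 1.
Proof.
move=> Hk; have s0 := Sk_gt0 Hk.
rewrite /alpha divr_ge0 ?ler0n ?(ltW s0) //= ler_pdivrMr // mul1r ler_nat.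
by apply: subset_leq_card; apply/subsetP=> y; rewrite inE => /andP[].
Qed.

Lemma trunc_inQ m (z : pt n T) : inQ S m.+1 z -> inQ S m (trunc m z).
Proof.
move/inQP=> Hz; apply/inQP=> i; rewrite ffunE; have := Hz i.
by case: (ltnP i m) => Hi //; rewrite ltnS (ltnW Hi).
Qed.

Lemma stepE k Q z : step S Fam h delta k Q z =
  (if inB Fam h k z then Num.max 0 ((alpha R S Fam h k (trunc k.-1 z) - delta k) /
      (alpha R S Fam h k (trunc k.-1 z) * (1 - delta k)))
   else Num.min (1 - alpha R S Fam h k (trunc k.-1 z))^-1 (1 - delta k)^-1)
  * Q (trunc k.-1 z) / #|S k|%:R.
Proof. by []. Qed.

Lemma Pk_ge0 m : (a <= m <= n)%N -> forall x, inQ S m x -> 0 <= P m x.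
Proof.
elim: m => [|m IH] /andP[Ham Hmn] x Hx.
  by move: Ham; rewrite leqn0 => /eqP Ha; apply: hPa0; rewrite inE Ha.
have [Hma|Hma] := leqP a m; last first.
  have Ha : a = m.+1 by apply/eqP; rewrite eqn_leq Ham.
  by rewrite -Ha Pk_a in Hx *; apply: hPa0; rewrite inE.
have Hk : (1 <= m.+1 <= n)%N by rewrite Hmn.
have Hd : 0 <= delta m.+1 <= 1/2 by apply: hdelta; rewrite ltnS Hma Hmn.
rewrite Pk_S // stepE /=.
have Hx' := trunc_inQ Hx.
have := fac_bounds (alpha01 (trunc m x) Hk) Hd; case=> ? ? ? ? _.
apply: mulr_ge0; last by rewrite invr_ge0 ltW // Sk_gt0.
apply: mulr_ge0; last by apply: IH => //; rewrite Hma ltnW.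
by case: ifP.
Qed.

Lemma inA_ext_in m (U : {set 'I_n}) g (x : pt n T) y (Hm : (m < n)%N) : Ordinal Hm \in U ->
  inA g [set i in U | (i < m.+1)%N] (ext m x y) =
  inA g [set i in U | (i < m)%N] x && (y == g (Ordinal Hm)).
Proof.
move=> HU; apply/forallP/andP.
  move=> H; split.
    apply/forallP => i; apply/implyP; rewrite inE => /andP[iU im].
    have := H i; rewrite inE iU ltnS (ltnW im) /= ffunE (ltn_eqF im).
    by [].
  have := H (Ordinal Hm); rewrite inE HU ltnSn /= ffunE eqxx.
  by move/eqP => [->].
move=> [H1 /eqP Hy] i; move/forallP: H1 => H1; apply/implyP; rewrite inE => /andP[iU im].
rewrite ffunE; have [E|NE] := eqVneq (i : nat) m.
  have -> : i = Ordinal Hm by apply: val_inj; rewrite /= E.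
  by rewrite /= Hy.
have im' : (i < m)%N by rewrite ltn_neqAle -ltnS im andbT.
by have := H1 i; rewrite inE iU im'.
Qed.

Lemma inA_ext_out m (U : {set 'I_n}) g (x : pt n T) y (Hm : (m < n)%N) : Ordinal Hm \notin U ->
  inA g [set i in U | (i < m.+1)%N] (ext m x y) =
  inA g [set i in U | (i < m)%N] x.
Proof.
move=> HU; have E : [set i in U | (i < m.+1)%N] = [set i in U | (i < m)%N].
  apply/setP => i; rewrite !inE; case iU: (i \in U) => //=.
  rewrite ltnS leq_eqVlt; case: eqP => // E.
  have E' : Ordinal Hm = i by apply: val_inj; rewrite /= E.
  by move: HU; rewrite E' iU.
rewrite /inA E; apply: eq_forallb => i; rewrite inE ffunE.
by case iU: (i \in U) => //=; case: ltnP => // im; rewrite (ltn_eqF im).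
Qed.


Definition fac m (x : pt n T) (y : T) : R :=
  let al := alpha R S Fam h m.+1 x in
  if inB Fam h m.+1 (ext m x y) then Num.max 0 ((al - delta m.+1) / (al * (1 - delta m.+1)))
  else Num.min (1 - al)^-1 (1 - delta m.+1)^-1.

Lemma fac_bnd m x y : (a <= m)%N -> (m < n)%N -> 0 <= fac m x y <= (1 - delta m.+1)^-1.
Proof.
move=> Ham Hmn.
have Hk : (1 <= m.+1 <= n)%N by rewrite Hmn.
have Hd : 0 <= delta m.+1 <= 1/2 by apply: hdelta; rewrite ltnS Ham Hmn.
have := fac_bounds (alpha01 x Hk) Hd; case=> ? ? ? ? _.
by rewrite /fac; case: ifP => _; apply/andP.
Qed.

Lemma sum_fac m x : (a <= m)%N -> (m < n)%N ->
  \sum_(y in S m.+1) fac m x y <= #|S m.+1|%:R.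
Proof.
move=> Ham Hmn.
have Hk : (1 <= m.+1 <= n)%N by rewrite Hmn.
have Hd : 0 <= delta m.+1 <= 1/2 by apply: hdelta; rewrite ltnS Ham Hmn.
have := fac_bounds (alpha01 x Hk) Hd; case=> _ _ _ _.
rewrite /fac.
set al := alpha R S Fam h m.+1 x.
set A := Num.max _ _; set B := Num.min _ _ => HAB.
set b := fun y => inB Fam h m.+1 (ext m x y).
have s0 := Sk_gt0 Hk.
have -> : \sum_(y in S m.+1) (if b y then A else B) =
          \sum_(y in S m.+1) (B + (b y)%:R * (A - B)).
  by apply: eq_bigr => y _; case: (b y) => /=; ring.
rewrite big_split /= sumr_const -mulr_suml sum_card.
have -> : #|[set y in S m.+1 | b y]|%:R = al * #|S m.+1|%:R.
  by rewrite /al /alpha divfK // gt_eqF.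
rewrite -mulr_natr.
move: s0 HAB; set s := #|S m.+1|%:R => s0 HAB.
nra.
Qed.


Lemma stepE' m Q (x : pt n T) y : inQ S m x ->
  step S Fam h delta m.+1 Q (ext m x y) = fac m x y * Q x / #|S m.+1|%:R.
Proof. by move=> Hx; rewrite stepE /= (ext_trunc y Hx). Qed.

Lemma key_base (U : {set 'I_n}) g :
  \sum_(x in Qset n S a | inA g [set i in U | (i < a)%N] x) P a x <=
  (\sum_(x in Qset n S a | inA g [set i in U | (i < a)%N] x) Pa x) *
  nu S delta [set i in U | (a <= i)%N && (i < a)%N].
Proof.
have -> : [set i in U | (a <= i)%N && (i < a)%N] = set0.
  by apply/setP => i; rewrite !inE; case: leqP; rewrite ?andbF.
by rewrite /nu big_set0 mulr1 Pk_a.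
Qed.

Lemma key m (U : {set 'I_n}) g : (a <= m <= n)%N ->
  \sum_(x in Qset n S m | inA g [set i in U | (i < m)%N] x) P m x <=
  (\sum_(x in Qset n S a | inA g [set i in U | (i < a)%N] x) Pa x) *
  nu S delta [set i in U | (a <= i)%N && (i < m)%N].
Proof.
elim: m => [|m IH] /andP[Ham Hmn].
  have Ha : 0%N = a by lia.
  by rewrite Ha; apply: key_base.
have [Hma|Hma] := leqP a m; last first.
  have Ha : m.+1 = a by lia.
  by rewrite Ha; apply: key_base.
have Hm : (m < n)%N := Hmn.
have IH' := IH (introT andP (conj Hma (ltnW Hmn))).
have Hk : (1 <= m.+1 <= n)%N by rewrite Hmn.
have s0 := Sk_gt0 Hk.
have Hd : 0 <= delta m.+1 <= 1/2 by apply: hdelta; rewrite ltnS Hma Hmn.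
have d0 : 0 < 1 - delta m.+1 by case/andP: Hd => ? ?; lra.
rewrite big_mkcondr (sumQ _ Hm) Pk_S //.
have Pge0 : forall x, x \in Qset n S m -> 0 <= P m x.
  by move=> x; rewrite inE; apply: Pk_ge0; rewrite Hma ltnW.
have [HU|HU] := boolP (Ordinal Hm \in U).
  set c := ((1 - delta m.+1) * #|S m.+1|%:R)^-1.
  have c0 : 0 <= c by rewrite invr_ge0 mulr_ge0 // ltW.
  apply: (le_trans (y := \sum_(x in Qset n S m)
     (if inA g [set i in U | (i < m)%N] x then P m x * c else 0))).
    apply: ler_sum => x Hx; have Hx' := Hx; rewrite inE in Hx'.
    under eq_bigr => y _ do rewrite (inA_ext_in _ _ _ HU) (stepE' _ _ Hx').
    case: (inA g _ x) => /=; last by rewrite big1.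
    set g0 := g (Ordinal Hm).
    have [g0S|g0S] := boolP (g0 \in S m.+1); last first.
      rewrite big1 ?mulr_ge0 ?Pge0 // => y yS.
      by case: eqP => // E; move: g0S; rewrite -E yS.
    rewrite (bigD1 g0) //= eqxx big1 ?addr0; last first.
      by move=> y /andP[_ /negbTE ->].
    have := fac_bnd x g0 Hma Hm; case/andP => f0 f1.
    apply: (le_trans (y := (1 - delta m.+1)^-1 * P m x / #|S m.+1|%:R)).
      by rewrite ler_wpM2r ?invr_ge0 ?(ltW s0) // ler_wpM2r // Pge0.
    by rewrite le_eqVlt; apply/orP; left; apply/eqP; rewrite /c invfM; ring.
  rewrite -big_mkcondr -mulr_suml.
  apply: le_trans (ler_wpM2r c0 IH') _.
  have -> : [set i in U | (a <= i)%N && (i < m.+1)%N] =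
            Ordinal Hm |: [set i in U | (a <= i)%N && (i < m)%N].
    apply/setP => i; rewrite !inE.
    have [E|NE] := eqVneq i (Ordinal Hm).
      by rewrite E HU /= Hma ltnSn.
    have Nm : ((i : nat) == m) = false.
      by apply/negbTE; apply: contra NE => /eqP E; apply/eqP; apply: val_inj.
    by have -> : (i < m.+1)%N = (i < m)%N by rewrite ltnS leq_eqVlt Nm.
  rewrite /nu big_setU1 /=; last by rewrite inE ltnn !andbF.
  by rewrite le_eqVlt; apply/orP; left; apply/eqP; rewrite /c; ring.
apply: (le_trans (y := \sum_(x in Qset n S m)
   (if inA g [set i in U | (i < m)%N] x then P m x else 0))).
  apply: ler_sum => x Hx; have Hx' := Hx; rewrite inE in Hx'.
  under eq_bigr => y _ do rewrite (inA_ext_out _ _ _ HU) (stepE' _ _ Hx').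
  case: (inA g _ x) => /=; last by rewrite big1.
  rewrite -!mulr_suml.
  apply: (le_trans (y := #|S m.+1|%:R * P m x / #|S m.+1|%:R)).
    by rewrite ler_wpM2r ?invr_ge0 ?(ltW s0) // ler_wpM2r ?Pge0 // sum_fac.
  by rewrite mulrAC mulfV ?mul1r // gt_eqF.
rewrite -big_mkcondr.
apply: le_trans IH' _.
have -> : [set i in U | (a <= i)%N && (i < m.+1)%N] =
          [set i in U | (a <= i)%N && (i < m)%N].
  apply/setP => i; rewrite !inE.
  case iU: (i \in U) => //=.
  have Nm : ((i : nat) == m) = false.
    apply/negbTE; apply/negP => /eqP E; move: HU.
    have E' : Ordinal Hm = i by apply: val_inj; rewrite /= E.
    by rewrite E' iU.
  by have -> : (i < m.+1)%N = (i < m)%N by rewrite ltnS leq_eqVlt Nm.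
by [].
Qed.


Lemma nu_ge0 k (J : {set 'I_n}) : (k <= n)%N ->
  (forall i, i \in J -> (a <= i)%N && (i.+1 < k)%N) -> 0 <= nu S delta J.
Proof.
move=> Hkn HJ; apply: prodr_ge0 => i /HJ /andP[ai ik].
have Hd : 0 <= delta i.+1 <= 1/2 by apply: hdelta; rewrite ltnS ai /= ltnW // (leq_trans ik).
rewrite invr_ge0 mulr_ge0 ?ler0n //; case/andP: Hd => ? ?; lra.
Qed.

Lemma prod_ind (I : finType) (b : pred I) :
  \prod_(j : I) (b j)%:R = ([forall j, b j])%:R :> R.
Proof.
case: (boolP [forall j, b j]) => [/forallP H|/forallP H].
  by rewrite big1 // => j _; rewrite H.
have [j Hj] : exists j, ~~ b j.
  by apply/existsP; rewrite -negb_forall; apply/forallP.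
by rewrite (bigD1 j) //= (negbTE Hj) mul0r.
Qed.

Section Final.
Hypothesis hh : forall F i, F \in Fam -> i \in F -> h F i \in S i.+1.
Variable k : nat.
Hypothesis hk : (a < k <= n)%N.

Let Hkm : (k.-1 < n)%N.
Proof. by case/andP: hk => H1 H2; lia. Qed.
Let i0 : 'I_n := Ordinal Hkm.

Definition indb (F : {set 'I_n}) (x : pt n T) :=
  [forall i in F, (i != i0) ==> (x i == Some (h F i))].

Lemma alpha_le x : alpha R S Fam h k x <=
   (\sum_(F in Nk Fam k) (indb F x)%:R) / #|S k|%:R.
Proof.
have Hk1 : (1 <= k <= n)%N by case/andP: hk => H1 H2; lia.
have s0 := Sk_gt0 Hk1.
rewrite /alpha ler_pM2r ?invr_gt0 // sum_card ler_nat.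
apply: leq_trans (leq_imset_card (fun F => h F i0) _).
apply: subset_leq_card; apply/subsetP => y; rewrite inE => /andP[yS /existsP[F /andP[FN HA]]].
move: (FN); rewrite inE => /andP[FFam /andP[subF nsubF]].
have [i iF ik] : exists2 i, i \in F & ~~ (i < k.-1)%N.
  move: nsubF => /forallP; rewrite -/(~ _) => H.
  apply/exists_inP; rewrite -negb_forall_in; apply/negP => H'; apply: H => j.
  by move/forall_inP: H' => H'; apply/implyP => /H'.
have ii0 : i = i0.
  apply: val_inj => /=; move/forall_inP: subF => /(_ i iF); move: ik; lia.
apply/imsetP; exists F.
  rewrite inE FN /=; apply/forall_inP => j jF; apply/implyP => ji0.
  move/forall_inP: HA => /(_ j jF); rewrite ffunE.
  suff -> : ((j : nat) == k.-1) = false by [].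
  by apply/negbTE; apply: contra ji0 => /eqP E; apply/eqP; apply: val_inj.
move/forall_inP: HA => /(_ i iF); rewrite ffunE ii0 /= eqxx.
by move/eqP => [].
Qed.


Lemma main t : Ealpha S Fam h a Pa delta k t <= rhs S Fam a Pa delta k t.
Proof.
have Hk1 : (1 <= k <= n)%N by case/andP: hk => H1 H2; lia.
have s0 := Sk_gt0 Hk1.
have Hak : (a <= k.-1 <= n)%N by case/andP: hk => H1 H2; lia.
have [y0 _] : exists y0, y0 \in S k.
  by apply/card_gt0P; have := hS Hk1; case: #|S k| => [|[]].
set w := fun F x => (indb F x)%:R : R.
rewrite /Ealpha /rhs.
apply: (le_trans (y := \sum_(x in Qset n S k.-1)
    P k.-1 x * ((#|S k|%:R ^+ t)^-1 * \sum_(Fs : {ffun 'I_t -> {set 'I_n}} | [forall j, Fs j \in Nk Fam k])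
        \prod_(j < t) w (Fs j) x))).
  apply: ler_sum => x Hx; rewrite inE in Hx.
  rewrite ler_wpM2l ?Pk_ge0 //.
  have -> : (#|S k|%:R ^+ t)^-1 * \sum_(Fs : {ffun 'I_t -> {set 'I_n}} | [forall j, Fs j \in Nk Fam k])
        \prod_(j < t) w (Fs j) x = ((\sum_(F in Nk Fam k) w F x) / #|S k|%:R) ^+ t.
    rewrite expr_div_n mulrC; congr (_ / _).
    have -> : (\sum_(F in Nk Fam k) w F x) ^+ t = \prod_(j < t) \sum_(F in Nk Fam k) w F x.
      by rewrite prodr_const card_ord.
    rewrite bigA_distr_big.
    by apply: eq_bigl => f; apply/forallP/ffun_onP.
  apply: lerXn2r; rewrite ?nnegrE.
  - by case/andP: (alpha01 x Hk1).
  - by rewrite divr_ge0 ?sumr_ge0 ?ler0n ?(ltW s0).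
  exact: alpha_le.
under eq_bigr => x _ do rewrite mulrCA.
rewrite -mulr_sumr ler_wpM2l ?invr_ge0 ?exprn_ge0 ?(ltW s0) //.
under eq_bigr => x _ do rewrite mulr_sumr.
rewrite exchange_big /=; apply: ler_sum => Fs HFs.
set UF := \bigcup_(j < t) Fs j.
pose gF : {ffun 'I_n -> T} :=
  [ffun i => if [pick j | i \in Fs j] is Some j then h (Fs j) i else y0].
have gFP : forall i, i \in UF -> exists2 j, i \in Fs j & gF i = h (Fs j) i.
  move=> i /bigcupP [j _ ij]; rewrite ffunE; case: pickP => [j' ij'|/(_ j)].
    by exists j'.
  by rewrite ij.
apply: (le_trans (y := \sum_(x in Qset n S k.-1 | inA gF [set i in UF | (i < k.-1)%N] x)
   P k.-1 x)).
  rewrite [X in _ <= X]big_mkcondr; apply: ler_sum => x Hx; rewrite inE in Hx.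
  rewrite /w prod_ind.
  case: (boolP [forall j, indb (Fs j) x]) => [/forallP H|_]; last first.
    by rewrite mulr0; case: ifP => _ //; apply: Pk_ge0.
  suff -> : inA gF [set i in UF | (i < k.-1)%N] x by rewrite mulr1.
  apply/forall_inP => i; rewrite inE => /andP[/gFP [j ij ->] ik].
  move: (H j) => /forall_inP /(_ i ij) /implyP; apply.
  by apply/eqP => E; move: ik; rewrite E /= ltnn.
apply: le_trans (key UF gF Hak) _.
have -> : [set i in UF | (a <= i)%N && (i < k.-1)%N] =
          [set i in UF | (a <= i)%N && (i.+1 < k)%N].
  apply/setP => i; rewrite !inE.
  have -> : (i < k.-1)%N = (i.+1 < k)%N by apply/idP/idP; lia.
  by [].
apply: ler_wpM2r.
  apply: (nu_ge0 (k := k)); first by case/andP: hk.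
  by move=> i; rewrite inE => /andP[].
rewrite /cI.
have Hg : [forall i in [set i in UF | (i < a)%N], gF i \in S i.+1].
  apply/forall_inP => i; rewrite inE => /andP[/gFP [j ij ->] _].
  apply: hh => //.
  by move/forallP: HFs => /(_ j); rewrite inE => /andP[].
exact: (le_bigmax_cond 0
  (fun g => \sum_(x in Qset n S a | inA g [set i in UF | (i < a)%N] x) Pa x) Hg).
Qed.

End Final.

End Main.

Unset Implicit Arguments. Set Strict Implicit. Set Printing Implicit Defensive.

Theorem lemma3p4 (R : realFieldType) (n : nat) (T : finType)
  (S : nat -> {set T})
  (hS : forall j, (1 <= j <= n)%N -> (2 <= #|S j|)%N)
  (Fam : {set {set 'I_n}}) (h : {set 'I_n} -> {ffun 'I_n -> T})
  (hFne : forall F, F \in Fam -> F != set0)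
  (hh : forall F i, F \in Fam -> i \in F -> h F i \in S i.+1)
  (a : nat) (ha : (a <= n)%N)
  (Pa : pt n T -> R)
  (hPa0 : forall x, x \in Qset n S a -> 0 <= Pa x)
  (hPa1 : \sum_(x in Qset n S a) Pa x = 1)
  (delta : nat -> R)
  (hdelta : forall j, (a < j <= n)%N -> 0 <= delta j <= 1 / 2)
  (k t : nat) (hk : (a < k <= n)%N) :
  Ealpha S Fam h a Pa delta k t <= rhs S Fam a Pa delta k t.
Proof.
by apply: main.
Qed.
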